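(* Let $A\in\mathbb{R}^{n\times n}$ be symmetric positive semidefinite, let $1\le k\le n$, and let $\mathrm{OPT}=\max_{\|y\|_2=1,\|y\|_0\le k} y^{\intercal}Ay$. Let $v_1$ be a unit-norm top eigenvector of $A$. Let $\hat x$ be defined by $\hat x_j=[v_1]_j$ if $[v_1]_j$ is one of the $k$ largest (in absolute value) entries of $v_1$, and $\hat x_j=0$ otherwise, and let $x=\hat x/\|\hat x\|_2$. Then $x^{\intercal}Ax\ge \frac{k}{n}\,\mathrm{OPT}$.
   Context: $\|y\|_0$ denotes the number of nonzero entries of $y$. *)

(* Defs.v *)
From HB Require Import structures.
From mathcomp Require Import all_boot all_order all_algebra.
From mathcomp Require Import classical_sets reals.
Set Implicit Arguments. Unset Strict Implicit. Unset Printing Implicit Defensive.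
Import Order.TTheory GRing.Theory Num.Theory.
Local Open Scope ring_scope.

Definition qform (R : realType) (n : nat) (A : 'M[R]_n) (y : 'cV[R]_n) : R :=
  (y^T *m A *m y) 0 0.

Definition sqnorm (R : realType) (n : nat) (y : 'cV[R]_n) : R :=
  \sum_i y i 0 ^+ 2.
Definition norm2 (R : realType) (n : nat) (y : 'cV[R]_n) : R :=
  Num.sqrt (sqnorm y).

Definition norm0 (R : realType) (n : nat) (y : 'cV[R]_n) : nat :=
  #|[set i | y i 0 != 0]|.

Definition sym_mx (R : realType) (n : nat) (A : 'M[R]_n) : Prop := A^T = A.

Definition psd (R : realType) (n : nat) (A : 'M[R]_n) : Prop :=
  forall z : 'cV[R]_n, 0 <= qform A z.

Definition eigenpair (R : realType) (n : nat) (A : 'M[R]_n) (lam : R) (v : 'cV[R]_n) : Prop :=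
  v != 0 /\ A *m v = lam *: v.

Definition top_eigenvector (R : realType) (n : nat) (A : 'M[R]_n) (v : 'cV[R]_n) : Prop :=
  exists lam, eigenpair A lam v /\
    (forall mu (w : 'cV[R]_n), eigenpair A mu w -> mu <= lam).

(* OPT = max { y^T A y : ||y||_2 = 1, ||y||_0 <= k }  (a maximum, written as sup) *)
Definition OPT (R : realType) (n : nat) (A : 'M[R]_n) (k : nat) : R :=
  sup (fun t : R => exists y : 'cV[R]_n,
         [/\ norm2 y = 1, (norm0 y <= k)%N & t = qform A y]).

Definition topk_support (R : realType) (n : nat) (v : 'cV[R]_n) (k : nat)
  (S : {set 'I_n}) : Prop :=
  #|S| = k /\ forall i j, i \in S -> j \notin S -> `|v j 0| <= `|v i 0|.

Definition truncate (R : realType) (n : nat) (v : 'cV[R]_n) (S : {set 'I_n}) : 'cV[R]_n :=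
  \col_j (if j \in S then v j 0 else 0).

(* Main.v *)
Require Import Defs.
From HB Require Import structures.
From mathcomp Require Import all_boot all_order all_algebra.
From mathcomp Require Import reals.
From mathcomp Require Import complex ring lra.
From mathcomp Require classical_sets.
Import Order.TTheory GRing.Theory Num.Theory.
Local Open Scope ring_scope.

Notation cRe := (@complex.Re _).
Notation cIm := (@complex.Im _).

Lemma ReM_rc (R : rcfType) (x : R) (z : R[i]) : cRe ((x%:C)%C * z) = x * cRe z.
Proof. by case: z => a b /=; rewrite mul0r subr0. Qed.
Lemma ImM_rc (R : rcfType) (x : R) (z : R[i]) : cIm ((x%:C)%C * z) = x * cIm z.
Proof. by case: z => a b /=; rewrite mul0r addr0. Qed.

Lemma eig_real_part (R : rcfType) n (A : 'M[R]_n) (k : R) (w : 'cV[R[i]]_n)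
  (f : R[i] -> R) : (forall x z, f ((x%:C)%C * z) = x * f z) ->
  (forall s : seq 'I_n, forall g : 'I_n -> R[i], f (\sum_(l <- s) g l) = \sum_(l <- s) f (g l)) ->
  map_mx (real_complex R) A *m w = (k%:C)%C *: w ->
  A *m map_mx f w = k *: map_mx f w.
Proof.
move=> fM fS /matrixP H; apply/matrixP => i j.
have := H i j; rewrite !mxE => /(congr1 f); rewrite fS fM => <-.
by apply: eq_bigr => l _; rewrite !mxE fM.
Qed.

Lemma Re_sum (R : rcfType) (I : Type) (s : seq I) (g : I -> R[i]) :
  cRe (\sum_(l <- s) g l) = \sum_(l <- s) cRe (g l).
Proof. elim: s => [|a s IH]; first by rewrite !big_nil. by rewrite !big_cons -IH; case: (g a) => ? ?; case: (\sum_(l <- s) g l). Qed.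
Lemma Im_sum (R : rcfType) (I : Type) (s : seq I) (g : I -> R[i]) :
  cIm (\sum_(l <- s) g l) = \sum_(l <- s) cIm (g l).
Proof. elim: s => [|a s IH]; first by rewrite !big_nil. by rewrite !big_cons -IH; case: (g a) => ? ?; case: (\sum_(l <- s) g l). Qed.
Lemma form_diag (C : numClosedFieldType) n (P : 'M[C]_n) (D : 'rV[C]_n) (yc : 'cV[C]_n) :
  P \is unitarymx -> map_mx Num.conj yc = yc ->
  (yc^T *m (invmx P *m diag_mx D *m P) *m yc) 0 0 =
  \sum_i D 0 i * (Num.conj ((P *m yc) i 0) * (P *m yc) i 0).
Proof.
move=> PU yr.
rewrite invmx_unitary // !mulmxA.
have -> : yc^T *m map_mx Num.conj (P^T) = (map_mx Num.conj (P *m yc))^T.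
  by rewrite map_mxM yr trmx_mul map_trmx.
rewrite -mulmxA mul_mx_diag !mxE; apply: eq_bigr => i _; rewrite !mxE.
by rewrite mulrA [_ * D 0 i]mulrC.
Qed.
Lemma sqnormE (R : realType) n (y : 'cV[R]_n) : sqnorm y = (y^T *m y) 0 0.
Proof. rewrite /sqnorm !mxE; apply: eq_bigr => i _; by rewrite !mxE expr2. Qed.

Lemma qform_le_top (R : realType) n (A : 'M[R]_n) lam :
  sym_mx A -> (forall mu w, eigenpair A mu w -> mu <= lam) ->
  forall y, qform A y <= lam * sqnorm y.
Proof.
move=> As Hlam y.
pose rc := real_complex R.
set Ac := map_mx rc A.
have Aherm : Ac \is hermsymmx.
  apply: realsym_hermsym.
    by apply/is_hermitianmxP; rewrite expr0 scale1r map_mx_id // /Ac map_trmx As.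
  by apply/mxOverP => i j; rewrite mxE; apply/complex_realP; exists (A i j).
have /orthomx_spectralP AcE := hermitian_normalmx Aherm.
set P := spectralmx Ac in AcE; set d := spectral_diag Ac in AcE.
have PU : P \is unitarymx := spectral_unitarymx Ac.
have Punit : P \in unitmx := spectral_unit Ac.
have dreal := hermitian_spectral_diag_real Aherm.
have dle : forall i, d 0 i <= (lam%:C)%C.
  move=> i; have /complex_realP [kk dk] : d 0 i \is Num.real by apply: (mxOverP dreal).
  rewrite dk lecR.
  pose w := invmx P *m delta_mx i (0 : 'I_1).
  have Aw : Ac *m w = (kk%:C)%C *: w.
    rewrite AcE /w -!mulmxA mulKVmx // mul_diag_mx scalemxAr; congr (_ *m _).
    apply/matrixP => a b; rewrite !mxE; case: eqP => [->|_]; last by rewrite !mulr0.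
    by rewrite dk.
  have wn0 : w != 0.
    apply/eqP => w0; have := congr1 (mulmx P) w0; rewrite /w mulKVmx // mulmx0.
    move/matrixP/(_ i 0); rewrite !mxE !eqxx /=; by move/eqP; rewrite oner_eq0.
  have Ha := @eig_real_part R n A kk w _ (@ReM_rc R) (@Re_sum R _) Aw.
  have Hb := @eig_real_part R n A kk w _ (@ImM_rc R) (@Im_sum R _) Aw.
  have [a0|an0] := eqVneq (map_mx cRe w) 0; last by apply: (Hlam _ _ (conj an0 Ha)).
  have [b0|bn0] := eqVneq (map_mx cIm w) 0; last by apply: (Hlam _ _ (conj bn0 Hb)).
  clearbody w; case/eqP: wn0; apply/matrixP => a b.
  move/matrixP: a0 => /(_ a b); move/matrixP: b0 => /(_ a b); rewrite !mxE.
  by case: (w a b) => /= x1 x2 -> ->.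
pose yc := map_mx rc y.
have ycr : map_mx Num.conj yc = yc.
  by apply/matrixP => a b; rewrite !mxE conj_Creal //; apply/complex_realP; exists (y a b).
have H1 : (qform A y)%:C%C = \sum_i d 0 i * (Num.conj ((P *m yc) i 0) * (P *m yc) i 0).
  rewrite -form_diag // -AcE /qform /yc /Ac /rc map_trmx -!map_mxM.
  by rewrite [in RHS]mxE.
have H2 : (sqnorm y)%:C%C = \sum_i (Num.conj ((P *m yc) i 0) * (P *m yc) i 0).
  rewrite -[RHS](_ : \sum_i (const_mx 1 : 'rV[R[i]]_n) 0 i * (Num.conj ((P *m yc) i 0) * (P *m yc) i 0) = _); last first.
    by apply: eq_bigr => i _; rewrite mxE mul1r.
  rewrite -form_diag // diag_const_mx mulmx1 mulVmx // mulmx1 sqnormE /yc /rc map_trmx -map_mxM.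
  by rewrite [in RHS]mxE.
rewrite -lecR rmorphM /= H1 H2 mulr_sumr; apply: ler_sum => i _.
apply: ler_wpM2r; last exact: dle.
by rewrite mulrC mul_conjC_ge0.
Qed.
Section Dot.
Local Set Implicit Arguments.
Context {R : realType} {n : nat}.
Definition dot (u w : 'cV[R]_n) : R := (u^T *m w) 0 0.
Lemma dotE u w : dot u w = \sum_i u i 0 * w i 0.
Proof. by rewrite /dot mxE; apply: eq_bigr => i _; rewrite mxE. Qed.
Lemma dotC u w : dot u w = dot w u.
Proof. by rewrite !dotE; apply: eq_bigr => i _; rewrite mulrC. Qed.
Lemma dotBr u w1 w2 : dot u (w1 - w2) = dot u w1 - dot u w2.
Proof. by rewrite !dotE -sumrB; apply: eq_bigr => i _; rewrite !mxE mulrBr. Qed.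
Lemma dotZr u c w : dot u (c *: w) = c * dot u w.
Proof. by rewrite !dotE mulr_sumr; apply: eq_bigr => i _; rewrite !mxE mulrCA. Qed.
Lemma dotBl u1 u2 w : dot (u1 - u2) w = dot u1 w - dot u2 w.
Proof. by rewrite dotC dotBr !(dotC w). Qed.
Lemma dotZl c u w : dot (c *: u) w = c * dot u w.
Proof. by rewrite dotC dotZr dotC. Qed.
Lemma dot_sym (A : 'M[R]_n) u w : A^T = A -> dot u (A *m w) = dot (A *m u) w.
Proof. by move=> As; rewrite /dot mulmxA -{1}As -trmx_mul. Qed.
Lemma qformE (A : 'M[R]_n) z : qform A z = dot z (A *m z).
Proof. by rewrite /qform /dot mulmxA. Qed.
Lemma sqnormE' z : sqnorm z = dot z z.
Proof. by rewrite dotE; apply: eq_bigr => i _; rewrite expr2. Qed.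
End Dot.

Lemma key_ineq (R : realType) n (A : 'M[R]_n) lam (v z : 'cV[R]_n) :
  sym_mx A -> psd A -> A *m v = lam *: v -> sqnorm v = 1 ->
  lam * (dot v z) ^+ 2 <= qform A z.
Proof.
move=> As Ap Av v1.
set a := dot v z; set w := z - a *: v.
have Aw : A *m w = A *m z - (a * lam) *: v by rewrite /w mulmxBr -scalemxAr Av scalerA.
have := Ap w; rewrite qformE Aw dotBr dotZr.
have -> : dot w v = 0 by rewrite /w dotBl dotZl -sqnormE' v1 mulr1 dotC subrr.
have -> : dot w (A *m z) = qform A z - a * (lam * a).
  by rewrite /w dotBl dotZl (dot_sym v z As) Av dotZl qformE.
by rewrite mulr0 subr0 subr_ge0 expr2 mulrCA mulrA.
Qed.
Lemma topk_mass (R : realType) n (v : 'cV[R]_n) k S :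
  (0 < n)%N -> sqnorm v = 1 -> topk_support v k S ->
  k%:R / n%:R <= sqnorm (truncate v S).
Proof.
move=> n0 v1 [cS Hs].
set T := \sum_(i in S) v i 0 ^+ 2.
set U := \sum_(i in ~: S) v i 0 ^+ 2.
have ET : sqnorm (truncate v S) = T.
  rewrite /sqnorm /T [RHS]big_mkcond; apply: eq_bigr => i _; rewrite mxE.
  by case: (i \in S); rewrite ?expr0n.
have EU : T + U = 1.
  rewrite -v1 /sqnorm (bigID (mem S)) /T /U; congr (_ + _); apply: eq_bigl => i.
  by rewrite inE.
have cC : #|~: S| = (n - k)%N by rewrite -[n in RHS]card_ord -(cardsC S) cS addKn.
have H : U *+ k <= T *+ (n - k).
  have : \sum_(i in S) U <= \sum_(i in S) (v i 0 ^+ 2 *+ #|~: S|).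
    apply: ler_sum => i iS; rewrite /U -sumr_const; apply: ler_sum => j jS.
    rewrite -(real_normK (num_real (v j 0))) -(real_normK (num_real (v i 0))).
    rewrite ler_sqr ?nnegrE ?normr_ge0 //.
    by apply: (Hs _ _ iS); rewrite finset.in_setC in jS.
  by rewrite sumr_const sumrMnl cS cC.
have kn : (k <= n)%N.
  by rewrite -cS; apply: leq_trans (max_card _) _; rewrite card_ord.
rewrite ET ler_pdivrMr ?ltr0n //.
move: H; rewrite -(mulr_natr U) -(mulr_natr T) natrB //.
have e1 : U = 1 - T by rewrite -EU addrC addKr.
rewrite e1 -subr_ge0 => H; rewrite -subr_ge0; move: H.
have -> : T * (n%:R - k%:R) - (1 - T) * k%:R = T * n%:R - k%:R :> R by ring.
by [].
Qed.

Lemma sq1 (R : realType) n (y : 'cV[R]_n) : norm2 y = 1 -> sqnorm y = 1.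
Proof.
move=> h; have s0 : 0 <= sqnorm y by apply: sumr_ge0 => i _; exact: sqr_ge0.
by rewrite -(sqr_sqrtr s0) -/(norm2 y) h expr1n.
Qed.

Theorem lemma2 (R : realType) (n k : nat) (A : 'M[R]_n)
  (v1 : 'cV[R]_n) (S : {set 'I_n}) :
  sym_mx A -> psd A -> (1 <= k)%N -> (k <= n)%N ->
  top_eigenvector A v1 -> norm2 v1 = 1 ->
  topk_support v1 k S ->
  let xhat := truncate v1 S in
  let x := (norm2 xhat)^-1 *: xhat in
  k%:R / n%:R * OPT A k <= qform A x.
Proof.
move=> As Ap k1 kn [lam [[v0 Av] Hmax]] nv Htop /=.
set xhat := truncate v1 S; set x := (norm2 xhat)^-1 *: xhat.
have n0 : (0 < n)%N by apply: leq_trans k1 kn.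
have sv := @sq1 _ _ _ nv.
have lam0 : 0 <= lam.
  by have := Ap v1; rewrite qformE Av dotZr -sqnormE' sv mulr1.
have OPTle : OPT A k <= lam.
  apply: ge_sup.
    pose i0 := Ordinal n0; pose e : 'cV[R]_n := delta_mx i0 0.
    have se : sqnorm e = 1.
      rewrite /sqnorm (bigD1 i0) //= big1 ?addr0; first by rewrite mxE !eqxx expr1n.
      by move=> i /negbTE ni; rewrite mxE ni expr0n.
    exists (qform A e); exists e; split => //.
      by rewrite /norm2 se sqrtr1.
    rewrite /norm0; have -> : [set i | e i 0 != 0] = [set i0].
      apply/setP => i; rewrite !inE mxE eqxx andbT.
      by case: (i == i0); rewrite ?oner_eq0 ?eqxx.
    by rewrite cards1.
  move=> t [y [ny _ ->]].
  by have := @qform_le_top _ _ _ _ As Hmax y; rewrite (@sq1 _ _ _ ny) mulr1.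
set s := sqnorm xhat.
have sk : k%:R / n%:R <= s := @topk_mass _ _ _ _ _ n0 sv Htop.
have s0 : 0 < s.
  apply: lt_le_trans sk; rewrite divr_gt0 // ltr0n //.
have dxs : dot v1 xhat = s.
  rewrite dotE /s /sqnorm; apply: eq_bigr => i _; rewrite /xhat /truncate !mxE.
  by case: (i \in S); rewrite ?mulr0 ?expr0n // expr2.
have := @key_ineq _ _ _ _ _ x As Ap Av sv.
rewrite /x dotZr dxs.
have -> : ((norm2 xhat)^-1 * s) ^+ 2 = s.
  rewrite exprMn exprVn /norm2 -/s sqr_sqrtr ?ltW //.
  by rewrite expr2 mulrA mulVf ?mul1r // gt_eqF.
apply: le_trans.
have kn0 : 0 <= k%:R / n%:R :> R by rewrite divr_ge0.
apply: (le_trans (y := k%:R / n%:R * lam)); first by rewrite ler_wpM2l.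
by rewrite mulrC ler_wpM2l.
Qed.
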